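(* Let $n$ be a positive integer. The $V^{n}$-move and the $\overline{V}^{n}$-move are equivalent, i.e., each of them is realized by a sequence of the other move and welded Reidemeister moves.
   Context: A virtual link diagram is the image of an immersion of finitely many ordered, oriented circles in the plane with transverse double points, each a classical crossing (with over/under information) or a virtual crossing. Welded Reidemeister moves are R1–R3, the virtual moves VR1–VR3 (Reidemeister moves with all crossings virtual) and VR4 (a strand with only virtual crossings slides past a classical crossing), and the OC move (a strand passing over two strands at classical crossings may slide across a virtual crossing of those two strands). The $V^{n}$-move: inside a disk the diagram consists of two arcs $a,b$ oriented in the same direction; on one side they are parallel without crossings; on the other side (same endpoints) the tangle is the $2$-braid word $(\sigma\tau)^{n}$, where $\sigma$ is a classical crossing with $b$ over $a$ and $\tau$ a virtual crossing (so $n$ classical crossings, all with $b$ over, alternating with $n$ virtual crossings); the move replaces one side by the other. The $\overline{V}^{n}$-move is the same local move except that the two arcs $a,b$ are oriented antiparallel. *)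

(* Defs.v *)
From Stdlib Require Import Relations.Relation_Operators.
From mathcomp Require Import all_boot.
Set Implicit Arguments. Unset Strict Implicit. Unset Printing Implicit Defensive.

(* An endpoint of an arrow (= a classical crossing) on a circle:
   (label, over, sign).  [over = true]: the point is the over-passage (tail
   of the arrow); [over = false]: the under-passage (head).  [sign = true]:
   positive crossing.  Convention: a crossing is positive iff
   det(direction of over strand, direction of under strand) > 0. *)
Definition event := (nat * bool * bool)%type.
Definition ev_lab (e : event) : nat := e.1.1.
Definition ev_over (e : event) : bool := e.1.2.
Definition ev_sgn (e : event) : bool := e.2.

(* A diagram: the ordered list of its oriented circles, each given by the
   sequence of crossing passages met along its orientation, read from some
   base point (base points are irrelevant: see [rot_step]).  A circle with
   no classical crossing is the empty sequence. *)
Definition diagram := seq (seq event).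

Definition wf (D : diagram) : bool :=
  let evs := flatten D in
  all (fun e =>
    [&& count (fun e' => (ev_lab e' == ev_lab e) && ev_over e') evs == 1,
        count (fun e' => (ev_lab e' == ev_lab e) && ~~ ev_over e') evs == 1 &
        all (fun e' => (ev_lab e' == ev_lab e) ==> (ev_sgn e' == ev_sgn e)) evs])
    evs.

Definition citem := (nat + event)%type.
Definition context := seq (seq citem).

Definition fill (C : context) (f : nat -> seq event) : diagram :=
  map (fun c => flatten (map (fun it => match it with
                                        | inl k => f k
                                        | inr e => [:: e] end) c)) C.

Definition holes_ok (m : nat) (C : context) : Prop :=
  forall k, count (fun it => it == inl k) (flatten C) = (k < m)%N.

(* Replace, inside m small disjoint arcs (the holes), the local pictures
   [before k] by [after k]; both diagrams must be well formed (this forces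
   the labels of the local crossings to be fresh). *)
Definition local_step (m : nat) (before after : nat -> seq event)
    (D D' : diagram) : Prop :=
  exists C : context, [/\ holes_ok m C, D = fill C before, D' = fill C after,
                          wf D & wf D'].

Definition rot_step (D D' : diagram) : Prop :=
  exists i k, [/\ (i < size D)%N, wf D &
    D' = set_nth [::] D i (rot k (nth [::] D i))].

Definition relabel_step (D D' : diagram) : Prop :=
  exists f : nat -> nat, [/\ injective f, wf D &
    D' = map (map (fun e : event => (f (ev_lab e), ev_over e, ev_sgn e))) D].

(** * Welded Reidemeister moves on Gauss diagrams
    (VR1-VR4 are invisible in Gauss diagrams.) *)

Definition R1_step (D D' : diagram) : Prop :=
  exists l o s, local_step 1 (fun _ => [::])
                  (fun _ => [:: (l, o, s); (l, ~~ o, s)]) D D'.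

(* R2: a bigon; both over passages adjacent on one arc (hole 0), both under
   passages adjacent on another arc (hole 1), in the same order (parallel
   strands) or in the reverse order (antiparallel); opposite signs. *)
Definition R2_step (D D' : diagram) : Prop :=
  exists l1 l2 s (r : bool), local_step 2 (fun _ => [::])
    (fun k => if k == 0 then [:: (l1, true, s); (l2, true, ~~ s)]
              else (if r then rev else id) [:: (l1, false, s); (l2, false, ~~ s)])
    D D'.

(* R3: three oriented lines in the plane, in the fixed model
     L0 : y = 0, direction (1,0);  L1 : x = 0, direction (0,1);
     L2 : through (0,c), direction (1,1),
   each oriented by o i (true = the given direction, false = its opposite),
   with pairwise distinct heights h i (larger = higher).  The move slides L2
   from c = -1 to c = 1 across L0 /\ L1.  Every R3 configuration is of this
   form up to relabelling of the strands, orientations and direction of the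
   move (a reflection of the plane is such a relabelling + reversal). *)
Section R3.
Variables (h : nat -> nat) (o : nat -> bool) (l01 l02 l12 : nat).

Definition r3_lab (i j : nat) : nat :=
  if [|| (i == 0) && (j == 1) | (i == 1) && (j == 0)] then l01
  else if [|| (i == 0) && (j == 2) | (i == 2) && (j == 0)] then l02 else l12.

(* sign of det(D a, D b) for the base directions D0 = (1,0), D1 = (0,1),
   D2 = (1,1): positive exactly for (0,1), (0,2), (2,1) *)
Definition detpos (a b : nat) : bool :=
  [|| (a == 0) && (b == 1), (a == 0) && (b == 2) | (a == 2) && (b == 1)].

Definition r3_sgn (i j : nat) : bool :=
  let ov := if (h j < h i)%N then i else j in
  let un := if (h j < h i)%N then j else i in
  (o ov == o un) == detpos ov un.

Definition r3_ev (i j : nat) : event := (r3_lab i j, (h j < h i)%N, r3_sgn i j).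

(* order of the two crossings along each oriented line for c = -1:
   along L0: L1 at 0, L2 at o0;  along L1: L0 at 0, L2 at -o1;
   along L2: L0 at o2, L1 at 0 (oriented parameters, o = +-1). *)
Definition r3_before (i : nat) : seq event :=
  if i == 0 then (if o 0 then [:: r3_ev 0 1; r3_ev 0 2] else [:: r3_ev 0 2; r3_ev 0 1])
  else if i == 1 then (if o 1 then [:: r3_ev 1 2; r3_ev 1 0] else [:: r3_ev 1 0; r3_ev 1 2])
  else (if o 2 then [:: r3_ev 2 1; r3_ev 2 0] else [:: r3_ev 2 0; r3_ev 2 1]).

Definition r3_after (i : nat) : seq event := rev (r3_before i).
End R3.

Definition R3_step (D D' : diagram) : Prop :=
  exists h o l01 l02 l12,
    [/\ h 0 != h 1, h 0 != h 2, h 1 != h 2 &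
        local_step 3 (r3_before h o l01 l02 l12) (r3_after h o l01 l02 l12) D D'].

Definition OC_step (D D' : diagram) : Prop :=
  exists l1 l2 s1 s2, local_step 1 (fun _ => [:: (l1, true, s1); (l2, true, s2)])
                                   (fun _ => [:: (l2, true, s2); (l1, true, s1)]) D D'.

Definition welded_step (D D' : diagram) : Prop :=
  rot_step D D' \/ relabel_step D D' \/ R1_step D D' \/ R2_step D D'
  \/ R3_step D D' \/ OC_step D D'.

(* Hole 0 is the arc a, hole 1 the arc b.  In (sigma tau)^n every classical
   crossing has b over a and the same local picture, hence the same sign;
   [eps] is this sign (it depends on the drawing of sigma, so we keep it as a
   parameter).  Along a the crossings are met in the order 1..n; along b
   also 1..n when a,b are parallel (V^n), and n..1 when b is reversed
   (Vbar^n); reversing b also flips every crossing sign, so the Vbar^n move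
   drawn with the same sigma has sign ~~ eps. *)
Definition Vn_step (n : nat) (eps : bool) (D D' : diagram) : Prop :=
  exists l : nat -> nat, local_step 2 (fun _ => [::])
    (fun k => if k == 0 then [seq (l i, false, eps) | i <- iota 0 n]
              else [seq (l i, true, eps) | i <- iota 0 n]) D D'.

Definition Vbarn_step (n : nat) (eps : bool) (D D' : diagram) : Prop :=
  exists l : nat -> nat, local_step 2 (fun _ => [::])
    (fun k => if k == 0 then [seq (l i, false, ~~ eps) | i <- iota 0 n]
              else rev [seq (l i, true, ~~ eps) | i <- iota 0 n]) D D'.

Definition welded_plus (M : diagram -> diagram -> Prop) : diagram -> diagram -> Prop :=
  clos_refl_sym_trans diagram (fun D D' => welded_step D D' \/ M D D').

(* Main.v *)
Require Import Defs.
From Stdlib Require Import Relations.Relation_Operators.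
From mathcomp Require Import all_boot zify.
Set Implicit Arguments. Unset Strict Implicit. Unset Printing Implicit Defensive.


Definition cF (f : nat -> seq event) (it : citem) : seq event :=
  match it with inl k => f k | inr e => [:: e] end.
Definition fill1 (c : seq citem) (f : nat -> seq event) := flatten (map (cF f) c).
Definition cH (h : nat -> seq citem) (it : citem) : seq citem :=
  match it with inl k => h k | inr e => [:: inr e] end.
Definition subst (C : context) (h : nat -> seq citem) : context :=
  map (fun c => flatten (map (cH h) c)) C.

Lemma fill1_cat s t f : fill1 (s ++ t) f = fill1 s f ++ fill1 t f.
Proof. by rewrite /fill1 map_cat flatten_cat. Qed.

Lemma fill1_inr s f : fill1 (map inr s) f = s.
Proof. by elim: s => //= e s IH; rewrite /fill1 /= -/(fill1 _ _) IH. Qed.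

Lemma fill_subst C h f : fill (subst C h) f = fill C (fun k => fill1 (h k) f).
Proof.
rewrite /fill /subst -map_comp; apply: eq_map => c /=.
elim: c => //= it c IH; rewrite map_cat flatten_cat IH.
by case: it.
Qed.

Lemma fill_ext C f g : f =1 g -> fill C f = fill C g.
Proof. by move=> fg; rewrite /fill; apply: eq_map => c; congr flatten; apply: eq_map => [[k|e]] //=. Qed.

Lemma flatten_fill C f : flatten (fill C f) = fill1 (flatten C) f.
Proof. by elim: C => //= c C IH; rewrite IH fill1_cat. Qed.

Lemma sumn_holes (G : citem -> nat) (s : seq citem) :
  (forall e, G (inr e) = 0) ->
  (forall k, 2 <= k -> count (fun it => it == inl k) s = 0) ->
  sumn (map G s) = count (fun it => it == inl 0) s * G (inl 0) + count (fun it => it == inl 1) s * G (inl 1).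
Proof.
move=> G0; elim: s => //= it s IH H.
have H' : forall k, 2 <= k -> count (fun it => it == inl k) s = 0.
  by move=> k /H /=; case: (it == inl k) => //=.
rewrite IH //; case: it H => [k|e] H.
- case: k H => [|[|k]] H /=; rewrite ?mulnDl; try lia.
  by have := H k.+2 isT; rewrite /= eqxx.
- by rewrite G0.
Qed.

Lemma holes2_sum C (G : citem -> nat) : holes_ok 2 C -> (forall e, G (inr e) = 0) ->
  sumn (map G (flatten C)) = G (inl 0) + G (inl 1).
Proof.
move=> H G0; rewrite sumn_holes // ?H ?mul1n // => k k2.
by rewrite H; case: k k2 => [|[|]].
Qed.

Lemma count_fill1 p s f : count p (fill1 s f) = sumn (map (fun it => count p (cF f it)) s).
Proof. by elim: s => //= it s IH; rewrite /fill1 /= count_cat -/(fill1 _ _) IH. Qed.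

Definition st (C0 : context) (A B : seq event) := fill C0 (fun k => if k == 0 then A else B).

Lemma perm_st C0 A B : holes_ok 2 C0 ->
  perm_eq (flatten (st C0 A B)) (flatten (st C0 [::] [::]) ++ A ++ B).
Proof.
move=> H; apply/permP => p /=.
rewrite !count_cat !flatten_fill !count_fill1.
have E : forall f, sumn [seq count p (cF f it) | it <- flatten C0] =
   sumn [seq (if it is inr e then p e : nat else 0) | it <- flatten C0] +
   sumn [seq (if it is inl k then count p (f k) else 0) | it <- flatten C0].
  move=> f; elim: (flatten C0) => //= it s ->; case: it => [k|e] /=; lia.
rewrite !E (holes2_sum (G := fun it => if it is inl k then count p _ else 0)) //.
rewrite (holes2_sum (G := fun it => if it is inl k then count p _ else 0)) //=.
lia.
Qed.

Definition wfs (evs : seq event) : bool :=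
  all (fun e =>
    [&& count (fun e' => (ev_lab e' == ev_lab e) && ev_over e') evs == 1,
        count (fun e' => (ev_lab e' == ev_lab e) && ~~ ev_over e') evs == 1 &
        all (fun e' => (ev_lab e' == ev_lab e) ==> (ev_sgn e' == ev_sgn e)) evs])
    evs.

Lemma wf_wfs D : wf D = wfs (flatten D). Proof. by []. Qed.

Lemma wfs_perm s t : perm_eq s t -> wfs s = wfs t.
Proof.
move=> P; rewrite /wfs (perm_all _ P); apply: eq_all => e.
by rewrite !(permP P) (perm_all _ P).
Qed.

Lemma wf_st C0 A B : holes_ok 2 C0 -> wf (st C0 A B) = wfs (flatten (st C0 [::] [::]) ++ A ++ B).
Proof. by move=> H; rewrite wf_wfs; apply: wfs_perm; apply: perm_st. Qed.

Lemma flatten_subst C h : flatten (subst C h) = flatten (map (cH h) (flatten C)).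
Proof. by elim: C => //= c C IH; rewrite IH map_cat flatten_cat. Qed.

Lemma holes_subst C h m : holes_ok 2 C ->
  (forall k, count (fun it => it == inl k) (h 0) + count (fun it => it == inl k) (h 1) = (k < m)) ->
  holes_ok m (subst C h).
Proof.
move=> H Hh k; rewrite flatten_subst -Hh.
have -> : forall s, count (fun it => it == inl k) (flatten (map (cH h) s)) =
   sumn (map (fun it => count (fun it => it == inl k) (cH h it)) s).
  by move=> s; elim: s => //= it s IH; rewrite count_cat IH.
by rewrite (holes2_sum (G := fun it => count (fun it => it == inl k) (cH h it))).
Qed.

Lemma count_inr k s : count (fun it => it == inl k) (map inr s : seq citem) = 0.
Proof. by elim: s. Qed.

Lemma fill1_hole A1 j A2 f : fill1 (map inr A1 ++ inl j :: map inr A2) f = A1 ++ f j ++ A2.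
Proof. by rewrite fill1_cat fill1_inr /fill1 /= -/(fill1 _ _) fill1_inr. Qed.

Lemma local2 C0 A1 A2 B1 B2 (sw : bool) bef aft : holes_ok 2 C0 ->
  wf (st C0 (A1 ++ bef (if sw then 1 else 0) ++ A2) (B1 ++ bef (if sw then 0 else 1) ++ B2)) ->
  wf (st C0 (A1 ++ aft (if sw then 1 else 0) ++ A2) (B1 ++ aft (if sw then 0 else 1) ++ B2)) ->
  local_step 2 bef aft
    (st C0 (A1 ++ bef (if sw then 1 else 0) ++ A2) (B1 ++ bef (if sw then 0 else 1) ++ B2))
    (st C0 (A1 ++ aft (if sw then 1 else 0) ++ A2) (B1 ++ aft (if sw then 0 else 1) ++ B2)).
Proof.
move=> H w1 w2.
pose h := fun k => if k == 0 then map inr A1 ++ inl (if sw then 1 else 0) :: map inr A2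
                   else map inr B1 ++ inl (if sw then 0 else 1) :: map inr B2.
have E : forall f, fill (subst C0 h) f = st C0 (A1 ++ f (if sw then 1 else 0) ++ A2) (B1 ++ f (if sw then 0 else 1) ++ B2).
  move=> f; rewrite fill_subst /st; apply: fill_ext => k; rewrite /h.
  by case: (k == 0); rewrite fill1_hole.
exists (subst C0 h); rewrite !E; split => //.
apply: holes_subst => // k; rewrite /h /= !count_cat /= !count_inr.
by clear w1 w2 E h; case: sw; case: k => [|[|k]].
Qed.

Lemma local1 C0 A B1 B2 bef aft : holes_ok 2 C0 ->
  wf (st C0 A (B1 ++ bef 0 ++ B2)) -> wf (st C0 A (B1 ++ aft 0 ++ B2)) ->
  local_step 1 bef aft (st C0 A (B1 ++ bef 0 ++ B2)) (st C0 A (B1 ++ aft 0 ++ B2)).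
Proof.
move=> H w1 w2.
pose h := fun k => if k == 0 then map inr A else map inr B1 ++ inl 0 :: map inr B2.
have E : forall f, fill (subst C0 h) f = st C0 A (B1 ++ f 0 ++ B2).
  move=> f; rewrite fill_subst /st; apply: fill_ext => k; rewrite /h.
  by case: (k == 0); rewrite ?fill1_hole ?fill1_inr.
exists (subst C0 h); rewrite !E; split => //.
apply: holes_subst => // k; rewrite /h /= !count_cat /= !count_inr.
by case: k => [|[|k]].
Qed.

Lemma wfs_arrow x sg s :
  wfs ((x, false, sg) :: (x, true, sg) :: s) = (x \notin map ev_lab s) && wfs s.
Proof.
case: (boolP (x \in map ev_lab s)) => [/mapP [e es ex] | nx] /=.
  apply/negbTE; rewrite /wfs /= /ev_lab /= eqxx /=.
  apply/negP => /andP [/andP [c1 /andP [c2 _]] _].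
  move: c1 c2; rewrite !add0n.
  case oe: (ev_over e).
  - have : 0 < count (fun e' : event => (e'.1.1 == x) && ev_over e') s.
      by rewrite -has_count; apply/hasP; exists e => //; rewrite /ev_lab in ex; rewrite -ex eqxx oe.
    lia.
  - have : 0 < count (fun e' : event => (e'.1.1 == x) && ~~ ev_over e') s.
      by rewrite -has_count; apply/hasP; exists e => //; rewrite /ev_lab in ex; rewrite -ex eqxx oe.
    lia.
have ne : forall e, e \in s -> (ev_lab e == x) = false.
  move=> e es; apply/negbTE; apply: contra nx => /eqP <-; exact: map_f.
have c0 : forall b : bool, count (fun e' : event => (ev_lab e' == x) && (if b then ev_over e' else ~~ ev_over e')) s = 0.
  move=> b; apply/eqP; rewrite -leqn0 leqNgt -has_count; apply/hasPn => e es.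
  by rewrite ne.
have a0 : all (fun e' : event => (ev_lab e' == x) ==> (ev_sgn e' == sg)) s.
  by apply/allP => e es; rewrite ne.
rewrite /wfs /=.
have := c0 true; have := c0 false; rewrite /= => -> ->.
rewrite /ev_lab /ev_over /ev_sgn /= !eqxx /=.
rewrite /ev_lab /ev_sgn /= in a0; rewrite a0 /=.
apply: eq_in_all => e es; have := ne e es; rewrite /ev_lab eq_sym => ->; by [].
Qed.

Ltac gen_counts := repeat match goal with |- context [count ?p ?s] => let c := fresh "c" in set c := count p s; clearbody c end.

Definition U (s : bool) (x : nat) : event := (x, false, s).
Definition O (s : bool) (x : nat) : event := (x, true, s).
Definition AWp (ps : seq (nat * bool)) : seq event :=
  flatten [seq [:: (p.1, false, p.2); (p.1, true, p.2)] | p <- ps].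
Definition ps2 s ls ms : seq (nat * bool) := [seq (x, s) | x <- ls] ++ [seq (x, ~~ s) | x <- ms].

Lemma labs_AWp x ps : (x \in map ev_lab (AWp ps)) = (x \in map fst ps).
Proof. by elim: ps => //= p ps IH; rewrite !in_cons -IH orbA orbb. Qed.

Lemma wfs_AWp ps E : wfs (AWp ps ++ E) =
  [&& uniq (map fst ps), all (fun p => p.1 \notin map ev_lab E) ps & wfs E].
Proof.
elim: ps => //= p ps IH.
rewrite /AWp /= -/(AWp _) wfs_arrow IH map_cat mem_cat labs_AWp negb_or.
by case: (p.1 \in map fst ps); case: (p.1 \in map ev_lab E) => //=; rewrite ?andbF.
Qed.

Lemma count_AWp q s ls ms : count q (AWp (ps2 s ls ms)) =
  count q (map (U s) ls) + count q (map (O s) ls) + count q (map (U (~~s)) ms) + count q (map (O (~~s)) ms).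
Proof.
elim: ls => [|l ls IH].
  elim: ms => // m ms IH.
  have -> : AWp (ps2 s [::] (m :: ms)) = (m, false, ~~s) :: (m, true, ~~s) :: AWp (ps2 s [::] ms) by [].
  rewrite /= IH /U /O /= ?add0n; gen_counts; clear IH; lia.
have -> : AWp (ps2 s (l :: ls) ms) = (l, false, s) :: (l, true, s) :: AWp (ps2 s ls ms) by [].
rewrite /= IH /U /O /= ?add0n; gen_counts; clear IH; lia.
Qed.

Lemma fst_ps2 s ls ms : map fst (ps2 s ls ms) = ls ++ ms.
Proof. by rewrite map_cat -!map_comp !map_id. Qed.

Lemma wf_remove C0 A B A' B' s ls ms : holes_ok 2 C0 -> wf (st C0 A B) ->
  perm_eq (A ++ B) (A' ++ B' ++ map (U s) ls ++ map (O s) ls ++ map (U (~~s)) ms ++ map (O (~~s)) ms) ->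
  wf (st C0 A' B').
Proof.
move=> H w P; rewrite wf_st // in w.
rewrite (@wfs_perm _ (AWp (ps2 s ls ms) ++ (flatten (st C0 [::] [::]) ++ A' ++ B'))) ?wfs_AWp in w.
  by rewrite wf_st //; case/and3P: w.
apply/permP => q; move/permP: P => P; have := P q => /=.
rewrite !count_cat count_AWp ?count_cat; gen_counts; lia.
Qed.

Lemma wf_extend C0 A B A' B' s ls ms : holes_ok 2 C0 -> wf (st C0 A B) ->
  perm_eq (A ++ B) (map (U s) ls ++ map (O s) ls) -> uniq ms ->
  (forall x, x \in ms -> forall y, y \in map ev_lab (flatten (st C0 A B)) -> y < x) ->
  perm_eq (A' ++ B') (map (U s) ls ++ map (O s) ls ++ map (U (~~s)) ms ++ map (O (~~s)) ms) ->
  wf (st C0 A' B').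
Proof.
move=> H w P um big P'.
set E := flatten (st C0 [::] [::]).
have PE := perm_st A B H.
have inL : forall y, y \in map ev_lab E -> y \in map ev_lab (flatten (st C0 A B)).
  move=> y /mapP [e eE ->]; apply: map_f; by rewrite (perm_mem PE) mem_cat eE.
have inL2 : forall y, y \in ls -> y \in map ev_lab (flatten (st C0 A B)).
  move=> y yl; apply/mapP; exists (U s y) => //.
  by rewrite (perm_mem PE) mem_cat (perm_mem P) mem_cat map_f ?orbT.
rewrite wf_st // in w; rewrite wf_st //.
rewrite (@wfs_perm _ (AWp (ps2 s ls [::]) ++ E)) ?wfs_AWp in w; last first.
  apply/permP => q; move/permP: P => P; have := P q => /=.
  rewrite !count_cat count_AWp /= ?count_cat ?add0n; gen_counts; lia.
rewrite (@wfs_perm _ (AWp (ps2 s ls ms) ++ E)) ?wfs_AWp; last first.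
  apply/permP => q; move/permP: P' => P'; have := P' q => /=.
  rewrite !count_cat count_AWp ?count_cat; gen_counts; lia.
case/and3P: w; rewrite fst_ps2 cats0 => u1 a1 w1.
rewrite fst_ps2 cat_uniq u1 um w1 /= !andbT.
apply/andP; split.
  apply/hasPn => x xm; apply/negP => xl.
  by have := big x xm x (inL2 x xl); rewrite ltnn.
rewrite /ps2 all_cat; apply/andP; split.
  by move: a1; rewrite /ps2 cats0.
rewrite all_map; apply/allP => x xm /=; apply/negP => xE.
by have := big x xm x (inL x xE); rewrite ltnn.
Qed.

Section Moves.
Variable M : diagram -> diagram -> Prop.
Notation R := (welded_plus M).

Lemma R_trans x y z : R x y -> R y z -> R x z.
Proof. exact: rst_trans. Qed.
Lemma R_sym x y : R x y -> R y x.
Proof. exact: rst_sym. Qed.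
Lemma R_refl x : R x x.
Proof. exact: rst_refl. Qed.
Lemma R_M x y : M x y -> R x y.
Proof. by move=> h; apply: rst_step; right. Qed.
Lemma R_R2 x y : R2_step x y -> R x y.
Proof. by move=> h; apply: rst_step; left; do 3 right; left. Qed.
Lemma R_OC x y : OC_step x y -> R x y.
Proof. by move=> h; apply: rst_step; left; do 5 right. Qed.

Lemma wf_permB C0 A B B' : holes_ok 2 C0 -> perm_eq B B' -> wf (st C0 A B) = wf (st C0 A B').
Proof.
move=> H P; rewrite !wf_st //; apply: wfs_perm.
by rewrite perm_cat2l perm_cat2l.
Qed.

Lemma oc_move C0 A B1 B2 t S : holes_ok 2 C0 -> ev_over t -> all ev_over S ->
  wf (st C0 A (B1 ++ t :: S ++ B2)) ->
  R (st C0 A (B1 ++ t :: S ++ B2)) (st C0 A (B1 ++ S ++ t :: B2)).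
Proof.
move=> H ot; elim: S B1 => [|u S IH] B1 /=; first by move=> _ _; apply: R_refl.
case/andP => ou oS w.
have w2 : wf (st C0 A ((B1 ++ [:: u]) ++ t :: S ++ B2)).
  rewrite (wf_permB _ H (B' := B1 ++ t :: u :: S ++ B2)) //.
  rewrite -catA /= perm_cat2l; apply/permP => q /=; gen_counts; lia.
apply: R_trans (_ : R _ (st C0 A ((B1 ++ [:: u]) ++ t :: S ++ B2))) _; last first.
  by rewrite -!catA /= in IH *; have := IH (B1 ++ [:: u]) oS; rewrite -!catA /=; apply; rewrite -catA in w2.
apply: R_OC; clear IH.
move: t u ot ou w w2 => [[lt [] ] st'] [[lu [] ] su'] //= _ _ w w2.
exists lt, lu, st', su'.
rewrite -catA /= in w2 *.
exact: (local1 (B1 := B1) (B2 := S ++ B2) (bef := fun _ => [:: (lt, true, st'); (lu, true, su')])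
          (aft := fun _ => [:: (lu, true, su'); (lt, true, st')]) H w w2).
Qed.

Lemma oc_rev C0 A B1 B2 S : holes_ok 2 C0 -> all ev_over S ->
  wf (st C0 A (B1 ++ S ++ B2)) ->
  R (st C0 A (B1 ++ S ++ B2)) (st C0 A (B1 ++ rev S ++ B2)).
Proof.
move=> H; elim: S B1 => [|t S IH] B1 /=; first by move=> _ _; apply: R_refl.
case/andP => ot oS w.
have := IH (B1 ++ [:: t]) oS; rewrite -!catA /= => /(_ w) h1.
apply: R_trans h1 _.
rewrite rev_cons -cats1 -catA /=.
apply: oc_move => //; first by rewrite all_rev.
rewrite (wf_permB _ H (B' := B1 ++ t :: S ++ B2)) //.
by rewrite perm_cat2l perm_cons perm_cat2r perm_rev.
Qed.
End Moves.

Lemma r2_phase M C0 s ls ms : holes_ok 2 C0 -> size ls = size ms -> forall A1 A2 B1 B2,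
  wf (st C0 (A1 ++ A2) (B1 ++ B2)) ->
  wf (st C0 (A1 ++ map (U s) ls ++ map (U (~~s)) (rev ms) ++ A2)
            (B1 ++ map (O s) ls ++ map (O (~~s)) (rev ms) ++ B2)) ->
  welded_plus M (st C0 (A1 ++ A2) (B1 ++ B2))
    (st C0 (A1 ++ map (U s) ls ++ map (U (~~s)) (rev ms) ++ A2)
            (B1 ++ map (O s) ls ++ map (O (~~s)) (rev ms) ++ B2)).
Proof.
move=> H; elim: ls ms => [|l ls IH] [|m ms] //= sz A1 A2 B1 B2 w wfin.
  exact: R_refl.
have wmid : wf (st C0 (A1 ++ [:: U s l; U (~~s) m] ++ A2) (B1 ++ [:: O s l; O (~~s) m] ++ B2)).
  apply: (wf_remove (s := s) (ls := ls) (ms := ms) H wfin).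
  apply/permP => q; rewrite !count_cat /= !count_cat !map_rev !count_rev /=.
  gen_counts; lia.
apply: R_trans (_ : welded_plus M _ (st C0 (A1 ++ [:: U s l; U (~~s) m] ++ A2) (B1 ++ [:: O s l; O (~~s) m] ++ B2))) _.
  apply: R_R2; exists l, m, s, false.
  exact: (local2 (A1 := A1) (A2 := A2) (B1 := B1) (B2 := B2) (sw := true) (bef := fun _ => [::])
     (aft := fun k => if k == 0 then [:: (l, true, s); (m, true, ~~ s)]
              else (if false then rev else id) [:: (l, false, s); (m, false, ~~ s)]) H w wmid).
have E1 : forall (X : seq event) x y Y, X ++ [:: x; y] ++ Y = (X ++ [:: x]) ++ y :: Y.
  by move=> X x y Y; rewrite -catA.
have E2 : forall (f g : nat -> event) (X : seq event) (Y : seq event), X ++ (f l :: map f ls) ++ map g (rev (m :: ms)) ++ Y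
   = (X ++ [:: f l]) ++ map f ls ++ map g (rev ms) ++ g m :: Y.
  by move=> f g X Y; rewrite rev_cons map_rcons cat_rcons -catA.
rewrite !E1 (E2 (U s) (U (~~s))) (E2 (O s) (O (~~s))).
apply: IH; first by case: sz.
  by rewrite -!E1.
by rewrite -(E2 (U s)) -(E2 (O s)).
Qed.

Lemma le_foldr_max y t : y \in t -> y <= foldr maxn 0 t.
Proof.
elim: t => //= z t IH; rewrite in_cons => /orP [/eqP -> | /IH h].
  exact: leq_maxl.
by rewrite leq_max h orbT.
Qed.

Lemma big_lab (D : diagram) n x y :
  x \in [seq (foldr maxn 0 (map ev_lab (flatten D))).+1 + i | i <- iota 0 n] ->
  y \in map ev_lab (flatten D) -> y < x.
Proof.
case/mapP => i _ -> /le_foldr_max h; lia.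
Qed.

Lemma uniq_L N n : uniq [seq N + i | i <- iota 0 n].
Proof. by rewrite map_inj_uniq ?iota_uniq //; exact: addnI. Qed.

Lemma all_over_O s L : all ev_over (map (O s) L).
Proof. by rewrite all_map; apply/allP. Qed.

Lemma dir1 n eps D D' : Vn_step n eps D D' -> welded_plus (Vbarn_step n eps) D D'.
Proof.
case=> l [C0 [H HD HD' wD wD']].
set ls := [seq l i | i <- iota 0 n].
have eD' : D' = st C0 (map (U eps) ls) (map (O eps) ls) by rewrite HD' /ls -!map_comp.
have eD : D = st C0 [::] [::] by rewrite HD; apply: fill_ext => k; case: (k == 0).
set N := (foldr maxn 0 (map ev_lab (flatten D'))).+1.
set L := [seq N + i | i <- iota 0 n].
have wS : wf (st C0 (map (U eps) ls ++ map (U (~~eps)) L) (map (O eps) ls ++ map (O (~~eps)) L)).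
  apply: (wf_extend (A := map (U eps) ls) (B := map (O eps) ls) (s := eps) (ls := ls) (ms := L) H).
  - by rewrite -eD'.
  - exact: perm_refl.
  - exact: uniq_L.
  - by rewrite -eD'; move=> x xL y yD; apply: (big_lab xL yD).
  - apply/permP => q; rewrite !count_cat; gen_counts; lia.
have wS2 : wf (st C0 (map (U eps) ls ++ map (U (~~eps)) L) (map (O eps) ls ++ rev (map (O (~~eps)) L))).
  rewrite -(wf_permB _ H (B := map (O eps) ls ++ map (O (~~eps)) L)) //.
  by rewrite perm_cat2l perm_sym perm_rev.
apply: R_trans (_ : welded_plus _ _ (st C0 (map (U eps) ls ++ map (U (~~eps)) L) (map (O eps) ls ++ map (O (~~eps)) L))) _.
  have := @r2_phase (Vbarn_step n eps) C0 eps ls (rev L) H.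
  rewrite size_rev /ls /L !size_map => /(_ erefl [::] [::] [::] [::]).
  rewrite /= revK !cats0 -/ls -/L eD; apply => //; by rewrite -eD.
apply: R_trans (_ : welded_plus _ _ (st C0 (map (U eps) ls ++ map (U (~~eps)) L) (map (O eps) ls ++ rev (map (O (~~eps)) L)))) _.
  have := @oc_rev (Vbarn_step n eps) C0 (map (U eps) ls ++ map (U (~~eps)) L) (map (O eps) ls) [::] (map (O (~~eps)) L) H (all_over_O _ _).
  by rewrite !cats0; apply.
apply: R_sym; apply: R_M; exists (fun i => N + i).
have := local2 (A1 := map (U eps) ls) (A2 := [::]) (B1 := map (O eps) ls) (B2 := [::]) (sw := false)
  (bef := fun _ => [::])
  (aft := fun k => if k == 0 then [seq (N + i, false, ~~ eps) | i <- iota 0 n]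
                   else rev [seq (N + i, true, ~~ eps) | i <- iota 0 n]) H.
rewrite /= !cats0 -eD'.
have e1 : [seq (N + i, false, ~~ eps) | i <- iota 0 n] = map (U (~~eps)) L by rewrite /L -map_comp.
have e2 : [seq (N + i, true, ~~ eps) | i <- iota 0 n] = map (O (~~eps)) L by rewrite /L -map_comp.
rewrite e1 e2 => h; apply: h => //.
Qed.

Lemma dir2 n eps D D' : Vbarn_step n eps D D' -> welded_plus (Vn_step n eps) D D'.
Proof.
case=> l [C0 [H HD HD' wD wD']].
set ls := [seq l i | i <- iota 0 n].
have eD' : D' = st C0 (map (U (~~eps)) ls) (rev (map (O (~~eps)) ls)) by rewrite HD' /ls -!map_comp.
have eD : D = st C0 [::] [::] by rewrite HD; apply: fill_ext => k; case: (k == 0).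
set N := (foldr maxn 0 (map ev_lab (flatten D'))).+1.
set L := [seq N + i | i <- iota 0 n].
have wS : wf (st C0 (map (U (~~eps)) ls ++ map (U eps) L) (map (O (~~eps)) ls ++ map (O eps) L)).
  apply: (wf_extend (A := map (U (~~eps)) ls) (B := rev (map (O (~~eps)) ls)) (s := ~~eps) (ls := ls) (ms := L) H).
  - by rewrite -eD'.
  - by apply/permP => q; rewrite !count_cat count_rev.
  - exact: uniq_L.
  - by rewrite -eD'; move=> x xL y yD; apply: (big_lab xL yD).
  - apply/permP => q; rewrite negbK !count_cat; gen_counts; lia.
set A' := map (U (~~eps)) ls ++ map (U eps) L.
have wS1 : wf (st C0 A' (rev (map (O (~~eps)) ls ++ map (O eps) L))).
  rewrite -(wf_permB _ H (B := map (O (~~eps)) ls ++ map (O eps) L)) //.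
  by rewrite perm_sym perm_rev.
have wS2 : wf (st C0 A' (map (O eps) L ++ rev (map (O (~~eps)) ls))).
  rewrite -(wf_permB _ H (B := map (O (~~eps)) ls ++ map (O eps) L)) //.
  by apply/permP => q; rewrite !count_cat count_rev; gen_counts; lia.
apply: R_trans (_ : welded_plus _ _ (st C0 A' (map (O (~~eps)) ls ++ map (O eps) L))) _.
  have := @r2_phase (Vn_step n eps) C0 (~~eps) ls (rev L) H.
  rewrite size_rev /ls /L !size_map => /(_ erefl [::] [::] [::] [::]).
  rewrite /= revK !cats0 negbK -/ls -/L eD; apply => //; by rewrite -eD.
apply: R_trans (_ : welded_plus _ _ (st C0 A' (rev (map (O (~~eps)) ls ++ map (O eps) L)))) _.
  have := @oc_rev (Vn_step n eps) C0 A' [::] [::] (map (O (~~eps)) ls ++ map (O eps) L) H.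
  rewrite all_cat !all_over_O !cats0 /=; by apply.
apply: R_trans (_ : welded_plus _ _ (st C0 A' (map (O eps) L ++ rev (map (O (~~eps)) ls)))) _.
  have := @oc_rev (Vn_step n eps) C0 A' [::] (rev (map (O (~~eps)) ls)) (rev (map (O eps) L)) H.
  rewrite all_rev all_over_O revK /= rev_cat; apply => //.
  by rewrite -rev_cat.
apply: R_sym; apply: R_M; exists (fun i => N + i).
have := local2 (A1 := map (U (~~eps)) ls) (A2 := [::]) (B1 := [::]) (B2 := rev (map (O (~~eps)) ls)) (sw := false)
  (bef := fun _ => [::])
  (aft := fun k => if k == 0 then [seq (N + i, false, eps) | i <- iota 0 n]
                   else [seq (N + i, true, eps) | i <- iota 0 n]) H.
rewrite /= !cats0 -eD'.
have e1 : [seq (N + i, false, eps) | i <- iota 0 n] = map (U eps) L by rewrite /L -map_comp.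
have e2 : [seq (N + i, true, eps) | i <- iota 0 n] = map (O eps) L by rewrite /L -map_comp.
rewrite e1 e2 => h; apply: h => //.
Qed.

Theorem proposition7p6 (n : nat) (eps : bool) : (0 < n)%N ->
  (forall D D' : diagram, Vn_step n eps D D' -> welded_plus (Vbarn_step n eps) D D') /\
  (forall D D' : diagram, Vbarn_step n eps D D' -> welded_plus (Vn_step n eps) D D').
Proof. by move=> _; split; [exact: dir1 | exact: dir2]. Qed.
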